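(* Let $I$ be a real interval of length $H \geq 1$. For every polynomial $P(T) = a_0 T^2 + a_1 T + a_2 \in \mathbb{Z}[T]$ with $a_0 \neq 0$ and every integer $k$, the number of integer points $(x,y) \in (I \times I) \cap \mathbb{Z}^2$ satisfying $P(x) + P(y) = k$ is at most $\sup_{1 \leq n \leq 144 H^4} r(n)$.
   Context: For an integer $n \geq 0$, $r(n)$ denotes the number of pairs of integers $(x,y)$ with $x^2 + y^2 = n$. *)

(* Defs.v *)
From Stdlib Require Import Reals ZArith List Lia Lra.
Import ListNotations.
Open Scope Z_scope.

Definition Zsym_range (m : Z) : list Z :=
  map (fun k => Z.of_nat k - m) (seq 0 (Z.to_nat (2 * m + 1))).

(* r(n) = #{(x,y) in Z^2 | x^2 + y^2 = n}; every solution has |x|,|y| <= n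
   (for n >= 0), so enumerating [-n,n]^2 counts all of them. *)
Definition r (n : Z) : nat :=
  length (filter (fun p : Z * Z => Z.eqb (fst p ^ 2 + snd p ^ 2) n)
                 (list_prod (Zsym_range n) (Zsym_range n))).

Close Scope Z_scope.
Open Scope R_scope.

(* I is a real interval of length H: its endpoints are a <= b with b - a = H,
   and I lies between the open interval (a,b) and the closed one [a,b]
   (this covers open, closed, half-open intervals). *)
Definition is_interval_of_length (I : R -> Prop) (H : R) : Prop :=
  exists a b : R, a <= b /\ b - a = H /\
    (forall x, a < x < b -> I x) /\ (forall x, I x -> a <= x <= b).

Definition evalP (a0 a1 a2 x : Z) : Z := (a0 * x ^ 2 + a1 * x + a2)%Z.

(* Main.v *)
Require Import Defs.
From Stdlib Require Import Reals ZArith List Lia Lra Psatz Classical.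
Open Scope Z_scope.

Lemma nodup_map_in {A B} (f : A -> B) (l : list A) :
  NoDup l -> (forall x y, In x l -> In y l -> f x = f y -> x = y) -> NoDup (map f l).
Proof.
  induction l as [|a l IH]; intros hnd hinj; simpl; constructor.
  - intros hin. apply in_map_iff in hin as [y [hy hiny]].
    inversion hnd; subst. assert (y = a) by (apply hinj; simpl; auto). subst; contradiction.
  - inversion hnd; subst. apply IH; auto. intros; apply hinj; simpl; auto.
Qed.

Lemma in_sym (u n : Z) : 1 <= n -> u ^ 2 <= n -> In u (Zsym_range n).
Proof.
  intros h1 h2. unfold Zsym_range. apply in_map_iff.
  assert (-n <= u <= n) by nia.
  exists (Z.to_nat (u + n)). split. { rewrite Z2Nat.id; lia. }
  apply in_seq. split; [lia|]. apply Nat2Z.inj_lt. rewrite !Z2Nat.id; lia.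
Qed.

Lemma count (pts : list (Z*Z)) (f : Z*Z -> Z*Z) (n : Z) :
  NoDup pts -> (forall p q, In p pts -> In q pts -> f p = f q -> p = q) ->
  (forall p, In p pts -> fst (f p) ^ 2 + snd (f p) ^ 2 = n) -> 1 <= n ->
  (length pts <= r n)%nat.
Proof.
  intros hnd hinj heq hn. rewrite <- (length_map f pts). unfold r.
  apply NoDup_incl_length. { apply nodup_map_in; auto. }
  intros [u v] hin. apply in_map_iff in hin as [p [hp hinp]].
  pose proof (heq p hinp) as e. rewrite hp in e. simpl in e.
  apply filter_In. split.
  - apply in_prod; apply in_sym; nia.
  - simpl. apply Z.eqb_eq. exact e.
Qed.

Lemma shift_eq a0 a1 a2 k x y c :
  evalP a0 a1 a2 x + evalP a0 a1 a2 y = k ->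
  a0*((x-c)^2+(y-c)^2) + (2*a0*c+a1)*((x-c)+(y-c)) = k - 2*a2 - 2*a0*c^2 - 2*a1*c.
Proof. unfold evalP. intros h. rewrite <- h. ring. Qed.

Lemma key a0 b K s t sp tp sq tq :
  a0 <> 0 ->
  a0*(s^2+t^2) + b*(s+t) = K ->
  a0*(sp^2+tp^2) + b*(sp+tp) = K ->
  a0*(sq^2+tq^2) + b*(sq+tq) = K ->
  let d := (sp+tp)-(sq+tq) in let E := (sp^2+tp^2)-(sq^2+tq^2) in
  (2*d*s - E)^2+(2*d*t-E)^2 = (2*d*sp - E)^2 + (2*d*tp - E)^2.
Proof.
  intros ha hr hp hq d E.
  assert (h1 : a0*((s^2+t^2)-(sp^2+tp^2)) = -b*((s+t)-(sp+tp))) by lia.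
  assert (h2 : a0*E = -b*d) by (unfold E, d; lia).
  assert (hx : a0 * (d*((s^2+t^2)-(sp^2+tp^2)) - E*((s+t)-(sp+tp))) = 0).
  { replace (a0 * (d*((s^2+t^2)-(sp^2+tp^2)) - E*((s+t)-(sp+tp)))) with
      (d*(a0*((s^2+t^2)-(sp^2+tp^2))) - (a0*E)*((s+t)-(sp+tp))) by ring.
    rewrite h1, h2. ring. }
  apply Z.mul_eq_0 in hx as [hx|hx]; [contradiction|].
  replace ((2*d*s - E)^2+(2*d*t-E)^2) with
    ((2*d*sp - E)^2 + (2*d*tp - E)^2 + 4*d*(d*((s^2+t^2)-(sp^2+tp^2)) - E*((s+t)-(sp+tp)))) by ring.
  rewrite hx. ring.
Qed.

Lemma key2 a0 a1 a2 k x y xp yp : a0 <> 0 ->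
  evalP a0 a1 a2 x + evalP a0 a1 a2 y = k ->
  evalP a0 a1 a2 xp + evalP a0 a1 a2 yp = k -> x + y = xp + yp ->
  (x-y)^2 = (xp-yp)^2.
Proof.
  intros ha h1 h2 hs. unfold evalP in *.
  assert (y = xp+yp-x) by lia. subst y.
  assert (hx : a0 * ((x - (xp+yp-x))^2 - (xp-yp)^2) = 0).
  { replace (a0 * ((x - (xp+yp-x))^2 - (xp-yp)^2)) with
     (2*((a0 * x ^ 2 + a1 * x + a2 + (a0 * (xp + yp - x) ^ 2 + a1 * (xp + yp - x) + a2))
       - (a0 * xp ^ 2 + a1 * xp + a2 + (a0 * yp ^ 2 + a1 * yp + a2)))) by ring.
    rewrite h1, h2. ring. }
  apply Z.mul_eq_0 in hx as [hx|hx]; [contradiction|lia].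
Qed.

Open Scope R_scope.
Lemma rbound e d t H : 1 <= H -> -2*H <= d <= 2*H -> -H <= t <= H ->
  -2*(H*H) <= e <= 2*(H*H) -> e*e + (2*d*t - e)*(2*d*t-e) <= 144*H^4.
Proof.
  intros hH hd ht he.
  assert (hdt : -2*(H*H) <= d*t <= 2*(H*H)) by (split; nra).
  assert (hw : -6*(H*H) <= 2*d*t - e <= 6*(H*H)) by lra.
  assert (hw2 : (2*d*t - e)*(2*d*t-e) <= 36*(H*H)*(H*H)) by nra.
  assert (he2 : e*e <= 4*(H*H)*(H*H)) by nra.
  assert (0 <= H*H*(H*H)) by nra.
  replace (H^4) with (H*H*(H*H)) by ring. lra.
Qed.

Lemma sqb x H : -H <= x <= H -> 0 <= x*x <= H*H.
Proof. intros; split; nra. Qed.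

Lemma inj_aux (d E x1 x2 xp : Z) : d <> 0%Z -> (2*d*(x1-xp)-E = 2*d*(x2-xp)-E)%Z -> x1 = x2.
Proof. intros hd h. assert (h2 : (2*d*(x1-x2) = 0)%Z) by (rewrite Z.mul_sub_distr_l; rewrite !Z.mul_sub_distr_l in h; lia).
  apply Z.mul_eq_0 in h2 as [h2|h2]; lia. Qed.

Lemma ebound H t s u : -H <= t <= H -> -H <= s <= H -> -H <= u <= H ->
  -2*(H*H) <= t*t - (s*s + u*u) <= 2*(H*H).
Proof. intros h1 h2 h3. pose proof (sqb _ _ h1). pose proof (sqb _ _ h2). pose proof (sqb _ _ h3). lra. Qed.

Lemma dbound H x : 1 <= H -> -H <= x <= H -> x*x + 1 <= 144 * H^4.
Proof. intros h1 h2. pose proof (sqb _ _ h2). assert (1 <= H*H) by nra.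
  assert (H*H <= H*H*(H*H)) by nra. replace (H^4) with (H*H*(H*H)) by ring. lra. Qed.

Lemma dif a b H u v : b - a = H -> a <= u <= b -> a <= v <= b -> -H <= u - v <= H.
Proof. intros; lra. Qed.

Theorem corollary2 (I : R -> Prop) (H : R) (a0 a1 a2 k : Z)
  (hI : is_interval_of_length I H) (hH : 1 <= H) (ha0 : a0 <> 0%Z)
  (pts : list (Z * Z)) (hnd : NoDup pts)
  (hpts : forall p, In p pts ->
     I (IZR (fst p)) /\ I (IZR (snd p)) /\
     (evalP a0 a1 a2 (fst p) + evalP a0 a1 a2 (snd p))%Z = k) :
  exists n : Z, (1 <= n)%Z /\ IZR n <= 144 * H ^ 4 /\ (length pts <= r n)%nat.
Proof.
  destruct hI as [a [b [hab [hba [_ hIab]]]]].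
  assert (hin : forall p, In p pts -> (a <= IZR (fst p) <= b) /\ (a <= IZR (snd p) <= b)
     /\ (evalP a0 a1 a2 (fst p) + evalP a0 a1 a2 (snd p))%Z = k).
  { intros p hp. destruct (hpts p hp) as [h1 [h2 h3]]. auto. }
  clear hpts.
  destruct pts as [|[xp yp] rest].
  { exists 1%Z. split; [lia|]. split; [pose proof (pow_R1_Rle H 4 hH); simpl IZR; lra|]. simpl. lia. }
  destruct (hin (xp,yp) (or_introl eq_refl)) as [hxp [hyp hkp]]. simpl in hxp, hyp, hkp.
  destruct (Classical_Prop.classic (exists q, In q ((xp,yp)::rest) /\ (fst q + snd q <> xp + yp)%Z))
    as [[[xq yq] [hq hqs]] | hno].
  - destruct (hin _ hq) as [hxq [hyq hkq]]. simpl in hxq, hyq, hkq, hqs.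
    set (d := (((xp-xp)+(yp-xp))-((xq-xp)+(yq-xp)))%Z).
    set (E := (((xp-xp)^2+(yp-xp)^2)-((xq-xp)^2+(yq-xp)^2))%Z).
    set (n := ((2*d*(xp-xp)-E)^2 + (2*d*(yp-xp)-E)^2)%Z).
    assert (hd : d <> 0%Z) by (unfold d; lia).
    assert (heq : forall p, In p ((xp,yp)::rest) ->
      (fst (2*d*(fst p - xp) - E, 2*d*(snd p - xp) - E)%Z ^2 +
       snd (2*d*(fst p - xp) - E, 2*d*(snd p - xp) - E)%Z ^2 = n)%Z).
    { intros p hp. destruct (hin p hp) as [_ [_ hk]]. simpl.
      unfold n, d, E. apply (key a0 (2*a0*xp+a1) (k - 2*a2 - 2*a0*xp^2 - 2*a1*xp)); auto;
      apply shift_eq; auto. }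
    assert (sq0 : forall u v : Z, (u^2 + v^2 = 0 -> u = 0 /\ v = 0)%Z).
    { intros u v huv. rewrite !Z.pow_2_r in huv.
      pose proof (Z.square_nonneg u). pose proof (Z.square_nonneg v).
      assert (hu : (u*u = 0)%Z) by lia. assert (hv : (v*v = 0)%Z) by lia.
      apply Z.mul_eq_0 in hu, hv. split; [destruct hu|destruct hv]; auto. }
    assert (hn1 : (1 <= n)%Z).
    { assert (0 <= n)%Z.
      { unfold n. rewrite !Z.pow_2_r. pose proof (Z.square_nonneg (2*d*(xp-xp)-E)).
        pose proof (Z.square_nonneg (2*d*(yp-xp)-E)). lia. }
      destruct (Z.eq_dec n 0) as [h0|h0]; [|lia].
      exfalso. pose proof (heq _ hq) as hq'. cbn [fst snd] in hq'.
      rewrite h0 in hq'. unfold n in h0.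
      apply sq0 in h0 as [e1 e1']. apply sq0 in hq' as [e2 e2'].
      rewrite Z.sub_diag, Z.mul_0_r in e1.
      assert (e4 : (2*d*(yp-xp) = 0)%Z) by lia.
      assert (e5 : (2*d*(xq-xp) = 0)%Z) by lia.
      assert (e6 : (2*d*(yq-xp) = 0)%Z) by lia.
      apply Z.mul_eq_0 in e4, e5, e6. lia. }
    exists n. split; [exact hn1|split].
    + assert (hn : n = (E*E + (2*d*(yp-xp)-E)*(2*d*(yp-xp)-E))%Z) by (unfold n; ring).
      rewrite hn, plus_IZR, !mult_IZR, !minus_IZR, !mult_IZR.
      assert (hE : E = ((yp-xp)*(yp-xp) - ((xq-xp)*(xq-xp)+(yq-xp)*(yq-xp)))%Z) by (unfold E; ring).
      assert (hd' : d = ((xp - xq) + (yp - yq))%Z) by (unfold d; ring).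
      rewrite hE, hd', !minus_IZR, !plus_IZR, !mult_IZR, !minus_IZR.
      pose proof (dif a b H _ _ hba hxp hxq).
      pose proof (dif a b H _ _ hba hyp hyq).
      pose proof (dif a b H _ _ hba hyp hxp).
      pose proof (dif a b H _ _ hba hxq hxp).
      pose proof (dif a b H _ _ hba hyq hxp).
      replace (IZR 2) with 2 by reflexivity.
      apply rbound; try lra.
      apply ebound; assumption.
    + apply (count _ (fun p => (2*d*(fst p - xp) - E, 2*d*(snd p - xp) - E)%Z) n); auto.
      * intros [x1 y1] [x2 y2] _ _ he. injection he as e1 e2.
        f_equal; eapply inj_aux; eauto.
  - exists (((xp-yp)^2) + 1)%Z. split; [|split].
    + pose proof (Z.square_nonneg (xp-yp)). rewrite Z.pow_2_r. lia.
    + rewrite plus_IZR, Z.pow_2_r, mult_IZR, minus_IZR.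
      pose proof (dif a b H _ _ hba hxp hyp). apply dbound; assumption.
    + apply (count _ (fun p => (fst p - snd p, 1)%Z)); auto; [| |pose proof (Z.square_nonneg (xp-yp)); rewrite Z.pow_2_r; lia].
      * intros [x1 y1] [x2 y2] h1 h2 he. injection he as e1.
        assert (s1 : (x1 + y1 = xp + yp)%Z) by
          (destruct (Z.eq_dec (x1+y1) (xp+yp)); auto; exfalso; apply hno; exists (x1,y1); auto).
        assert (s2 : (x2 + y2 = xp + yp)%Z) by
          (destruct (Z.eq_dec (x2+y2) (xp+yp)); auto; exfalso; apply hno; exists (x2,y2); auto).
        f_equal; lia.
      * intros [x y] hp. cbn [fst snd].
        destruct (hin _ hp) as [_ [_ hk]]. cbn [fst snd] in hk.
        assert (s1 : (x + y = xp + yp)%Z) by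
          (destruct (Z.eq_dec (x+y) (xp+yp)); auto; exfalso; apply hno; exists (x,y); auto).
        rewrite (key2 a0 a1 a2 k x y xp yp); auto.
Qed.
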